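(* Let $T=(T,\mu,\iota)$ be a normal lax double monad on an equipment $\mathcal K$. For horizontal morphism $K\colon C\nrightarrow D$ and vertical morphism $g\colon B\to D$, let $K(\mathrm{id},g)\colon C\nrightarrow B$ be a restriction of $K$ along $\mathrm{id}_C$ and $g$. If the cells $\iota_K$ and $\iota_{g^*}$ (where $g^*\colon D\nrightarrow B$ is the conjoint of $g$) satisfy the right Beck–Chevalley condition, then so does $\iota_{K(\mathrm{id},g)}$.
   Context: Double categories: a double category has objects, vertical morphisms (composition $\circ$), horizontal morphisms $J\colon A\nrightarrow B$ (composition $\odot$ in diagrammatic order, units $1_A$, weakly associative/unital) and cells with horizontal source $J\colon A\nrightarrow B$, horizontal target $K\colon C\nrightarrow D$, vertical sides $f\colon A\to C$, $g\colon B\to D$. A cell $\phi\colon J\Rightarrow K$ with sides $f,g$ is cartesian if every cell $H\Rightarrow K$ with sides $f\circ h,g\circ k$ factors uniquely through $\phi$ via a cell $H\Rightarrow J$ with sides $h,k$; then $J=K(f,g)$ is a restriction. Opcartesian cells dually. The companion $f_*=1_C(f,\mathrm{id})$ and conjoint $f^*=1_C(\mathrm{id},f)$ of $f\colon A\to C$; $f_*$ is equivalently given by an opcartesian cell $1_A\Rightarrow f_*$ with sides $\mathrm{id}_A,f$. An equipment has all companions and conjoints. A normal lax double monad $(T,\mu,\iota)$: a lax double functor $T\colon\mathcal K\to\mathcal K$ preserving vertical structure and horizontal units strictly and horizontal composition up to coherent compositor cells, with double transformations $\mu\colon T^2\Rightarrow T$, $\iota\colon\mathrm{id}\Rightarrow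 T$ satisfying the monad axioms; $\iota$ consists of vertical morphisms $\iota_A\colon A\to TA$ and cells $\iota_J\colon J\Rightarrow TJ$ with sides $\iota_A,\iota_B$, natural, compatible with compositors, $\iota_{1_A}=1_{\iota_A}$. Right Beck–Chevalley condition: for $J\colon A\nrightarrow B$, $\iota_{J*}\colon J\odot\iota_{B*}\Rightarrow\iota_{A*}\odot TJ$ is the horizontal composite of the opcartesian cell $1_A\Rightarrow\iota_{A*}$ (sides $\mathrm{id}_A,\iota_A$), $\iota_J$, and the cartesian cell $\iota_{B*}\Rightarrow 1_{TB}$ (sides $\iota_B,\mathrm{id}_{TB}$); $\iota_J$ satisfies the condition if $\iota_{J*}$ is invertible. *)

(* Defs.v *)
(* A (pseudo) double category is presented "algebraically": sorts of
   objects, vertical morphisms, horizontal morphisms and cells, with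
   boundary maps, total composition operations and axioms that constrain
   them on composable inputs. *)

Record DCat := {
  ob : Type;
  ver : Type;
  vdom : ver -> ob; vcod : ver -> ob;
  vid : ob -> ver;
  vcomp : ver -> ver -> ver;        (* vcomp g f = g o f   (f first) *)
  hor : Type;
  hdom : hor -> ob; hcod : hor -> ob;
  hunit : ob -> hor;
  hcomp : hor -> hor -> hor;        (* hcomp J K = J (.) K, diagrammatic: J : A -|-> B, K : B -|-> C *)
  cell : Type;
  csrc : cell -> hor;
  ctgt : cell -> hor;
  cleft : cell -> ver;
  cright : cell -> ver;
  cid : hor -> cell;
  ccomp : cell -> cell -> cell;     (* ccomp phi psi : phi then psi (vertical composition) *)
  cunit : ver -> cell;
  chcomp : cell -> cell -> cell;    (* horizontal composition of cells (diagrammatic) *)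
  assoc : hor -> hor -> hor -> cell;
  lunitor : hor -> cell;
  runitor : hor -> cell
}.

Arguments vdom {d} _. Arguments vcod {d} _. Arguments vid {d} _.
Arguments vcomp {d} _ _. Arguments hdom {d} _. Arguments hcod {d} _.
Arguments hunit {d} _. Arguments hcomp {d} _ _. Arguments csrc {d} _.
Arguments ctgt {d} _. Arguments cleft {d} _. Arguments cright {d} _.
Arguments cid {d} _. Arguments ccomp {d} _ _. Arguments cunit {d} _.
Arguments chcomp {d} _ _. Arguments assoc {d} _ _ _. Arguments lunitor {d} _.
Arguments runitor {d} _.

Section DoubleCategories.
Context {D : DCat}.

Definition IsCell (phi : cell D) (J K : hor D) (f g : ver D) : Prop :=
  csrc phi = J /\ ctgt phi = K /\ cleft phi = f /\ cright phi = g.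

Definition globular (phi : cell D) : Prop :=
  cleft phi = vid (hdom (csrc phi)) /\ cright phi = vid (hcod (csrc phi)).

Definition inverse_cells (phi psi : cell D) : Prop :=
  csrc psi = ctgt phi /\ ctgt psi = csrc phi /\
  ccomp phi psi = cid (csrc phi) /\ ccomp psi phi = cid (ctgt phi).

Definition globular_iso (phi : cell D) : Prop :=
  globular phi /\ exists psi, globular psi /\ inverse_cells phi psi.

Definition cartesian (phi : cell D) : Prop :=
  forall (psi : cell D) (h k : ver D),
    ctgt psi = ctgt phi ->
    vcod h = vdom (cleft phi) -> vcod k = vdom (cright phi) ->
    cleft psi = vcomp (cleft phi) h -> cright psi = vcomp (cright phi) k ->
    exists! theta, IsCell theta (csrc psi) (csrc phi) h k /\ ccomp theta phi = psi.

Definition opcartesian (phi : cell D) : Prop :=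
  forall (psi : cell D) (h k : ver D),
    csrc psi = csrc phi ->
    vdom h = vcod (cleft phi) -> vdom k = vcod (cright phi) ->
    cleft psi = vcomp h (cleft phi) -> cright psi = vcomp k (cright phi) ->
    exists! theta, IsCell theta (ctgt phi) (ctgt psi) h k /\ ccomp phi theta = psi.

End DoubleCategories.

Record IsPseudoDouble (D : DCat) : Prop := {
  vid_dom : forall A : ob D, vdom (vid A) = A;
  vid_cod : forall A : ob D, vcod (vid A) = A;
  vcomp_dom : forall f g : ver D, vcod f = vdom g -> vdom (vcomp g f) = vdom f;
  vcomp_cod : forall f g : ver D, vcod f = vdom g -> vcod (vcomp g f) = vcod g;
  vcomp_idl : forall f : ver D, vcomp (vid (vcod f)) f = f;
  vcomp_idr : forall f : ver D, vcomp f (vid (vdom f)) = f;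
  vcomp_assoc : forall f g h : ver D, vcod f = vdom g -> vcod g = vdom h ->
      vcomp h (vcomp g f) = vcomp (vcomp h g) f;
  hunit_dom : forall A : ob D, hdom (hunit A) = A;
  hunit_cod : forall A : ob D, hcod (hunit A) = A;
  hcomp_dom : forall J K : hor D, hcod J = hdom K -> hdom (hcomp J K) = hdom J;
  hcomp_cod : forall J K : hor D, hcod J = hdom K -> hcod (hcomp J K) = hcod K;
  cell_bd : forall phi : cell D,
      hdom (csrc phi) = vdom (cleft phi) /\ hcod (csrc phi) = vdom (cright phi) /\
      hdom (ctgt phi) = vcod (cleft phi) /\ hcod (ctgt phi) = vcod (cright phi);
  cid_bd : forall J : hor D, IsCell (cid J) J J (vid (hdom J)) (vid (hcod J));
  ccomp_bd : forall phi psi : cell D, ctgt phi = csrc psi ->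
      IsCell (ccomp phi psi) (csrc phi) (ctgt psi)
             (vcomp (cleft psi) (cleft phi)) (vcomp (cright psi) (cright phi));
  ccomp_idl : forall phi : cell D, ccomp (cid (csrc phi)) phi = phi;
  ccomp_idr : forall phi : cell D, ccomp phi (cid (ctgt phi)) = phi;
  ccomp_assoc : forall phi psi chi : cell D,
      ctgt phi = csrc psi -> ctgt psi = csrc chi ->
      ccomp phi (ccomp psi chi) = ccomp (ccomp phi psi) chi;
  cunit_bd : forall f : ver D,
      IsCell (cunit f) (hunit (vdom f)) (hunit (vcod f)) f f;
  chcomp_bd : forall phi psi : cell D, cright phi = cleft psi ->
      IsCell (chcomp phi psi) (hcomp (csrc phi) (csrc psi)) (hcomp (ctgt phi) (ctgt psi))
             (cleft phi) (cright psi);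
  cunit_vid : forall A : ob D, cunit (vid A) = cid (hunit A);
  cunit_vcomp : forall f g : ver D, vcod f = vdom g ->
      cunit (vcomp g f) = ccomp (cunit f) (cunit g);
  chcomp_cid : forall J K : hor D, hcod J = hdom K ->
      chcomp (cid J) (cid K) = cid (hcomp J K);
  interchange : forall phi phi' psi psi' : cell D,
      ctgt phi = csrc psi -> ctgt phi' = csrc psi' ->
      cright phi = cleft phi' -> cright psi = cleft psi' ->
      chcomp (ccomp phi psi) (ccomp phi' psi') = ccomp (chcomp phi phi') (chcomp psi psi');
  assoc_bd : forall J K L : hor D, hcod J = hdom K -> hcod K = hdom L ->
      IsCell (assoc J K L) (hcomp (hcomp J K) L) (hcomp J (hcomp K L))
             (vid (hdom J)) (vid (hcod L));
  assoc_iso : forall J K L : hor D, hcod J = hdom K -> hcod K = hdom L ->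
      globular_iso (assoc J K L);
  assoc_nat : forall phi psi chi : cell D,
      cright phi = cleft psi -> cright psi = cleft chi ->
      ccomp (chcomp (chcomp phi psi) chi) (assoc (ctgt phi) (ctgt psi) (ctgt chi)) =
      ccomp (assoc (csrc phi) (csrc psi) (csrc chi)) (chcomp phi (chcomp psi chi));
  lunitor_bd : forall J : hor D,
      IsCell (lunitor J) (hcomp (hunit (hdom J)) J) J (vid (hdom J)) (vid (hcod J));
  lunitor_iso : forall J : hor D, globular_iso (lunitor J);
  lunitor_nat : forall phi : cell D,
      ccomp (chcomp (cunit (cleft phi)) phi) (lunitor (ctgt phi)) =
      ccomp (lunitor (csrc phi)) phi;
  runitor_bd : forall J : hor D,
      IsCell (runitor J) (hcomp J (hunit (hcod J))) J (vid (hdom J)) (vid (hcod J));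
  runitor_iso : forall J : hor D, globular_iso (runitor J);
  runitor_nat : forall phi : cell D,
      ccomp (chcomp phi (cunit (cright phi))) (runitor (ctgt phi)) =
      ccomp (runitor (csrc phi)) phi;
  pentagon : forall J K L M : hor D,
      hcod J = hdom K -> hcod K = hdom L -> hcod L = hdom M ->
      ccomp (assoc (hcomp J K) L M) (assoc J K (hcomp L M)) =
      ccomp (ccomp (chcomp (assoc J K L) (cid M)) (assoc J (hcomp K L) M))
            (chcomp (cid J) (assoc K L M));
  triangle : forall J K : hor D, hcod J = hdom K ->
      ccomp (assoc J (hunit (hcod J)) K) (chcomp (cid J) (lunitor K)) =
      chcomp (runitor J) (cid K)
}.

(* Equipment: every vertical morphism f : A -> C has a companion
   f_* = 1_C(f, id) and a conjoint f^* = 1_C(id, f), i.e. restrictions of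
   the horizontal unit 1_C (cartesian cells into 1_C). *)
Definition IsEquipment (D : DCat) : Prop :=
  forall f : ver D,
    (exists (E : hor D) (rho : cell D),
        IsCell rho E (hunit (vcod f)) f (vid (vcod f)) /\ cartesian rho) /\
    (exists (E : hor D) (rho : cell D),
        IsCell rho E (hunit (vcod f)) (vid (vcod f)) f /\ cartesian rho).

Record LaxData (D : DCat) := {
  FO : ob D -> ob D;
  FV : ver D -> ver D;
  FH : hor D -> hor D;
  FC : cell D -> cell D;
  Fcomp : hor D -> hor D -> cell D
}.
Arguments FO {D} _ _. Arguments FV {D} _ _. Arguments FH {D} _ _.
Arguments FC {D} _ _. Arguments Fcomp {D} _ _ _.

Record IsNormalLax {D : DCat} (F : LaxData D) : Prop := {
  FV_dom : forall f, vdom (FV F f) = FO F (vdom f);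
  FV_cod : forall f, vcod (FV F f) = FO F (vcod f);
  FH_dom : forall J, hdom (FH F J) = FO F (hdom J);
  FH_cod : forall J, hcod (FH F J) = FO F (hcod J);
  FC_bd : forall phi, IsCell (FC F phi) (FH F (csrc phi)) (FH F (ctgt phi))
                             (FV F (cleft phi)) (FV F (cright phi));
  FV_vid : forall A, FV F (vid A) = vid (FO F A);
  FV_vcomp : forall f g, vcod f = vdom g -> FV F (vcomp g f) = vcomp (FV F g) (FV F f);
  FC_cid : forall J, FC F (cid J) = cid (FH F J);
  FC_ccomp : forall phi psi, ctgt phi = csrc psi ->
      FC F (ccomp phi psi) = ccomp (FC F phi) (FC F psi);
  FH_hunit : forall A, FH F (hunit A) = hunit (FO F A);
  FC_cunit : forall f, FC F (cunit f) = cunit (FV F f);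
  Fcomp_bd : forall J K, hcod J = hdom K ->
      IsCell (Fcomp F J K) (hcomp (FH F J) (FH F K)) (FH F (hcomp J K))
             (vid (FO F (hdom J))) (vid (FO F (hcod K)));
  Fcomp_nat : forall phi psi, cright phi = cleft psi ->
      ccomp (chcomp (FC F phi) (FC F psi)) (Fcomp F (ctgt phi) (ctgt psi)) =
      ccomp (Fcomp F (csrc phi) (csrc psi)) (FC F (chcomp phi psi));
  Fcomp_assoc : forall J K L, hcod J = hdom K -> hcod K = hdom L ->
      ccomp (ccomp (chcomp (Fcomp F J K) (cid (FH F L))) (Fcomp F (hcomp J K) L))
            (FC F (assoc J K L)) =
      ccomp (ccomp (assoc (FH F J) (FH F K) (FH F L))
                   (chcomp (cid (FH F J)) (Fcomp F K L)))
            (Fcomp F J (hcomp K L));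
  Fcomp_lunit : forall J,
      ccomp (Fcomp F (hunit (hdom J)) J) (FC F (lunitor J)) = lunitor (FH F J);
  Fcomp_runit : forall J,
      ccomp (Fcomp F J (hunit (hcod J))) (FC F (runitor J)) = runitor (FH F J)
}.

Definition idLax (D : DCat) : LaxData D :=
  {| FO := fun A => A; FV := fun f => f; FH := fun J => J; FC := fun phi => phi;
     Fcomp := fun J K => cid (hcomp J K) |}.

Definition compLax {D : DCat} (F G : LaxData D) : LaxData D :=
  {| FO := fun A => FO G (FO F A);
     FV := fun f => FV G (FV F f);
     FH := fun J => FH G (FH F J);
     FC := fun phi => FC G (FC F phi);
     Fcomp := fun J K => ccomp (Fcomp G (FH F J) (FH F K)) (FC G (Fcomp F J K)) |}.

Record IsDoubleTransformation {D : DCat} (F G : LaxData D)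
    (alphaO : ob D -> ver D) (alphaH : hor D -> cell D) : Prop := {
  tr_dom : forall A, vdom (alphaO A) = FO F A;
  tr_cod : forall A, vcod (alphaO A) = FO G A;
  tr_bd : forall J, IsCell (alphaH J) (FH F J) (FH G J) (alphaO (hdom J)) (alphaO (hcod J));
  tr_nat_ver : forall f, vcomp (alphaO (vcod f)) (FV F f) = vcomp (FV G f) (alphaO (vdom f));
  tr_nat_cell : forall phi,
      ccomp (FC F phi) (alphaH (ctgt phi)) = ccomp (alphaH (csrc phi)) (FC G phi);
  tr_unit : forall A, alphaH (hunit A) = cunit (alphaO A);
  tr_comp : forall J K, hcod J = hdom K ->
      ccomp (chcomp (alphaH J) (alphaH K)) (Fcomp G J K) =
      ccomp (Fcomp F J K) (alphaH (hcomp J K))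
}.

Record IsNormalLaxMonad {D : DCat} (T : LaxData D)
    (muO : ob D -> ver D) (muH : hor D -> cell D)
    (iotaO : ob D -> ver D) (iotaH : hor D -> cell D) : Prop := {
  monad_T : IsNormalLax T;
  monad_mu : IsDoubleTransformation (compLax T T) T muO muH;
  monad_iota : IsDoubleTransformation (idLax D) T iotaO iotaH;
  monad_assoc_O : forall A, vcomp (muO A) (FV T (muO A)) = vcomp (muO A) (muO (FO T A));
  monad_lunit_O : forall A, vcomp (muO A) (iotaO (FO T A)) = vid (FO T A);
  monad_runit_O : forall A, vcomp (muO A) (FV T (iotaO A)) = vid (FO T A);
  monad_assoc_H : forall J, ccomp (FC T (muH J)) (muH J) = ccomp (muH (FH T J)) (muH J);
  monad_lunit_H : forall J, ccomp (iotaH (FH T J)) (muH J) = cid (FH T J);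
  monad_runit_H : forall J, ccomp (FC T (iotaH J)) (muH J) = cid (FH T J)
}.

(* For any companion iota_{A*} of iota_A, presented by an opcartesian cell
   oA : 1_A => iota_{A*} with sides id_A, iota_A, and any companion iota_{B*}
   of iota_B, presented by a cartesian cell cB : iota_{B*} => 1_{TB} with
   sides iota_B, id_{TB}, the horizontal composite oA . iota_J . cB is
   an invertible (globular) cell.  Its boundary is
   (1_A . J) . iota_{B*} => (iota_{A*} . TJ) . 1_{TB}, which is iota_{J*}
   up to the (invertible) unitors. *)
Definition RightBC {D : DCat} (T : LaxData D)
    (iotaO : ob D -> ver D) (iotaH : hor D -> cell D) (J : hor D) : Prop :=
  forall (EA : hor D) (oA : cell D) (EB : hor D) (cB : cell D),
    IsCell oA (hunit (hdom J)) EA (vid (hdom J)) (iotaO (hdom J)) ->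
    opcartesian oA ->
    IsCell cB EB (hunit (FO T (hcod J))) (iotaO (hcod J)) (vid (FO T (hcod J))) ->
    cartesian cB ->
    globular_iso (chcomp (chcomp oA (iotaH J)) cB).

(* Main.v *)
Require Import Defs.
From Stdlib Require Import ClassicalEpsilon.

Section Dev.
Context {D : DCat} (HD : IsPseudoDouble D).
Implicit Types (a b c p q x y : cell D) (J K L X Y : hor D) (f g : ver D) (A B : ob D).

Notation "a ▷ b" := (ccomp a b) (at level 40, left associativity).
Notation "a ⊙ b" := (chcomp a b) (at level 33, left associativity).

Lemma csrc_cc a b : ctgt a = csrc b -> csrc (a ▷ b) = csrc a.
Proof. intro H. apply (ccomp_bd D HD a b H). Qed.
Lemma ctgt_cc a b : ctgt a = csrc b -> ctgt (a ▷ b) = ctgt b.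
Proof. intro H. apply (ccomp_bd D HD a b H). Qed.
Lemma cleft_cc a b : ctgt a = csrc b -> cleft (a ▷ b) = vcomp (cleft b) (cleft a).
Proof. intro H. apply (ccomp_bd D HD a b H). Qed.
Lemma cright_cc a b : ctgt a = csrc b -> cright (a ▷ b) = vcomp (cright b) (cright a).
Proof. intro H. apply (ccomp_bd D HD a b H). Qed.
Lemma csrc_ch a b : cright a = cleft b -> csrc (a ⊙ b) = hcomp (csrc a) (csrc b).
Proof. intro H. apply (chcomp_bd D HD a b H). Qed.
Lemma ctgt_ch a b : cright a = cleft b -> ctgt (a ⊙ b) = hcomp (ctgt a) (ctgt b).
Proof. intro H. apply (chcomp_bd D HD a b H). Qed.
Lemma cleft_ch a b : cright a = cleft b -> cleft (a ⊙ b) = cleft a.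
Proof. intro H. apply (chcomp_bd D HD a b H). Qed.
Lemma cright_ch a b : cright a = cleft b -> cright (a ⊙ b) = cright b.
Proof. intro H. apply (chcomp_bd D HD a b H). Qed.
Lemma csrc_cid J : csrc (cid J) = J. Proof. apply (cid_bd D HD J). Qed.
Lemma ctgt_cid J : ctgt (cid J) = J. Proof. apply (cid_bd D HD J). Qed.
Lemma cleft_cid J : cleft (cid J) = vid (hdom J). Proof. apply (cid_bd D HD J). Qed.
Lemma cright_cid J : cright (cid J) = vid (hcod J). Proof. apply (cid_bd D HD J). Qed.
Lemma csrc_cu f : csrc (cunit f) = hunit (vdom f). Proof. apply (cunit_bd D HD f). Qed.
Lemma ctgt_cu f : ctgt (cunit f) = hunit (vcod f). Proof. apply (cunit_bd D HD f). Qed.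
Lemma cleft_cu f : cleft (cunit f) = f. Proof. apply (cunit_bd D HD f). Qed.
Lemma cright_cu f : cright (cunit f) = f. Proof. apply (cunit_bd D HD f). Qed.
Lemma csrc_as J K L : hcod J = hdom K -> hcod K = hdom L ->
  csrc (assoc J K L) = hcomp (hcomp J K) L.
Proof. intros. apply (assoc_bd D HD J K L); auto. Qed.
Lemma ctgt_as J K L : hcod J = hdom K -> hcod K = hdom L ->
  ctgt (assoc J K L) = hcomp J (hcomp K L).
Proof. intros. apply (assoc_bd D HD J K L); auto. Qed.
Lemma cleft_as J K L : hcod J = hdom K -> hcod K = hdom L ->
  cleft (assoc J K L) = vid (hdom J).
Proof. intros. apply (assoc_bd D HD J K L); auto. Qed.
Lemma cright_as J K L : hcod J = hdom K -> hcod K = hdom L ->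
  cright (assoc J K L) = vid (hcod L).
Proof. intros. apply (assoc_bd D HD J K L); auto. Qed.
Lemma csrc_lu J : csrc (lunitor J) = hcomp (hunit (hdom J)) J. Proof. apply (lunitor_bd D HD J). Qed.
Lemma ctgt_lu J : ctgt (lunitor J) = J. Proof. apply (lunitor_bd D HD J). Qed.
Lemma cleft_lu J : cleft (lunitor J) = vid (hdom J). Proof. apply (lunitor_bd D HD J). Qed.
Lemma cright_lu J : cright (lunitor J) = vid (hcod J). Proof. apply (lunitor_bd D HD J). Qed.
Lemma csrc_ru J : csrc (runitor J) = hcomp J (hunit (hcod J)). Proof. apply (runitor_bd D HD J). Qed.
Lemma ctgt_ru J : ctgt (runitor J) = J. Proof. apply (runitor_bd D HD J). Qed.
Lemma cleft_ru J : cleft (runitor J) = vid (hdom J). Proof. apply (runitor_bd D HD J). Qed.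
Lemma cright_ru J : cright (runitor J) = vid (hcod J). Proof. apply (runitor_bd D HD J). Qed.
Lemma hdom_hc J K : hcod J = hdom K -> hdom (hcomp J K) = hdom J.
Proof. apply (hcomp_dom D HD). Qed.
Lemma hcod_hc J K : hcod J = hdom K -> hcod (hcomp J K) = hcod K.
Proof. apply (hcomp_cod D HD). Qed.
Lemma hdom_hu A : hdom (hunit A) = A. Proof. apply (hunit_dom D HD). Qed.
Lemma hcod_hu A : hcod (hunit A) = A. Proof. apply (hunit_cod D HD). Qed.
Lemma vdom_vid A : vdom (vid A) = A. Proof. apply (vid_dom D HD). Qed.
Lemma vcod_vid A : vcod (vid A) = A. Proof. apply (vid_cod D HD). Qed.
Lemma vdom_vc f g : vcod f = vdom g -> vdom (vcomp g f) = vdom f.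
Proof. apply (vcomp_dom D HD). Qed.
Lemma vcod_vc f g : vcod f = vdom g -> vcod (vcomp g f) = vcod g.
Proof. apply (vcomp_cod D HD). Qed.
Lemma vc_idl f B : vcod f = B -> vcomp (vid B) f = f.
Proof. intros <-. apply (vcomp_idl D HD). Qed.
Lemma vc_idr f A : vdom f = A -> vcomp f (vid A) = f.
Proof. intros <-. apply (vcomp_idr D HD). Qed.



Lemma cca a b c : ctgt a = csrc b -> ctgt b = csrc c -> a ▷ (b ▷ c) = a ▷ b ▷ c.
Proof. intros. apply (ccomp_assoc D HD); auto. Qed.
Lemma cc_idl a J : csrc a = J -> cid J ▷ a = a.
Proof. intros <-. apply (ccomp_idl D HD). Qed.
Lemma cc_idr a J : ctgt a = J -> a ▷ cid J = a.
Proof. intros <-. apply (ccomp_idr D HD). Qed.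
Lemma ich a b c d : ctgt a = csrc b -> ctgt c = csrc d -> cright a = cleft c -> cright b = cleft d ->
  (a ▷ b) ⊙ (c ▷ d) = (a ⊙ c) ▷ (b ⊙ d).
Proof. intros. apply (interchange D HD); auto. Qed.
Lemma glob_hdom a : globular a -> hdom (ctgt a) = hdom (csrc a).
Proof. intros [H1 H2]. destruct (cell_bd D HD a) as [? [? [? ?]]]. rewrite H3, H1, vcod_vid. reflexivity. Qed.
Lemma glob_hcod a : globular a -> hcod (ctgt a) = hcod (csrc a).
Proof. intros [H1 H2]. destruct (cell_bd D HD a) as [? [? [? ?]]]. rewrite H4, H2, vcod_vid. reflexivity. Qed.

Definition inv a : cell D := epsilon (inhabits a) (fun b => globular b /\ inverse_cells a b).
Lemma inv_spec a : globular_iso a -> globular (inv a) /\ inverse_cells a (inv a).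
Proof. intros [Hg Hex]. unfold inv. apply (epsilon_spec (inhabits a) (fun b => globular b /\ inverse_cells a b)). exact Hex. Qed.
Lemma csrc_inv a : globular_iso a -> csrc (inv a) = ctgt a.
Proof. intro H. apply inv_spec in H. apply H. Qed.
Lemma ctgt_inv a : globular_iso a -> ctgt (inv a) = csrc a.
Proof. intro H. apply inv_spec in H. apply H. Qed.
Lemma inv_l a : globular_iso a -> a ▷ inv a = cid (csrc a).
Proof. intro H. apply inv_spec in H. apply H. Qed.
Lemma inv_r a : globular_iso a -> inv a ▷ a = cid (ctgt a).
Proof. intro H. apply inv_spec in H. apply H. Qed.
Lemma cleft_inv a : globular_iso a -> cleft (inv a) = cleft a.
Proof. intro H. pose proof (csrc_inv a H) as E. pose proof (proj1 H) as Hgl.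
  destruct (inv_spec a H) as [[G1 _] _]. rewrite G1, E, (glob_hdom a Hgl).
  destruct Hgl as [L _]. rewrite L. reflexivity. Qed.
Lemma cright_inv a : globular_iso a -> cright (inv a) = cright a.
Proof. intro H. pose proof (csrc_inv a H) as E. pose proof (proj1 H) as Hgl.
  destruct (inv_spec a H) as [[_ G1] _]. rewrite G1, E, (glob_hcod a Hgl).
  destruct Hgl as [_ L]. rewrite L. reflexivity. Qed.

Ltac bdn :=
  repeat first
   [ rewrite csrc_cid | rewrite ctgt_cid | rewrite cleft_cid | rewrite cright_cid
   | rewrite csrc_cu | rewrite ctgt_cu | rewrite cleft_cu | rewrite cright_cu
   | rewrite csrc_lu | rewrite ctgt_lu | rewrite cleft_lu | rewrite cright_lu
   | rewrite csrc_ru | rewrite ctgt_ru | rewrite cleft_ru | rewrite cright_ru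
   | rewrite hdom_hu | rewrite hcod_hu | rewrite vdom_vid | rewrite vcod_vid
   | rewrite csrc_cc by bd0 | rewrite ctgt_cc by bd0 | rewrite cleft_cc by bd0 | rewrite cright_cc by bd0
   | rewrite csrc_ch by bd0 | rewrite ctgt_ch by bd0 | rewrite cleft_ch by bd0 | rewrite cright_ch by bd0
   | rewrite csrc_as by bd0 | rewrite ctgt_as by bd0 | rewrite cleft_as by bd0 | rewrite cright_as by bd0
   | rewrite hdom_hc by bd0 | rewrite hcod_hc by bd0 | rewrite vdom_vc by bd0 | rewrite vcod_vc by bd0
   | rewrite vc_idl by bd0 | rewrite vc_idr by bd0
   | rewrite csrc_inv by assumption | rewrite ctgt_inv by assumption
   | rewrite cleft_inv by assumption | rewrite cright_inv by assumption ]
with bd0 := bdn; first [reflexivity | congruence].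

Ltac gfacts a Ha L R Dm Cd :=
  let G := fresh "G" in pose proof (proj1 Ha) as G;
  pose proof (glob_hdom a G) as Dm; pose proof (glob_hcod a G) as Cd;
  destruct G as [L R].

Lemma iso_cc a b : ctgt a = csrc b -> globular_iso a -> globular_iso b -> globular_iso (a ▷ b).
Proof.
  intros E Ha Hb. gfacts a Ha La Ra Da Ca. gfacts b Hb Lb Rb Db Cb.
  split.
  - split; bdn.
    + rewrite Lb, La, <- E, Da. apply vc_idl. bd0.
    + rewrite Rb, Ra, <- E, Ca. apply vc_idl. bd0.
  - exists (inv b ▷ inv a). destruct (inv_spec a Ha) as [[I1 I2] _]. destruct (inv_spec b Hb) as [[J1 J2] _].
    split; [split|].
    + bdn. rewrite La, Lb, Db, <- E, Da. apply vc_idl; bd0.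
    + bdn. rewrite Ra, Rb, Cb, <- E, Ca. apply vc_idl; bd0.
    + split; [bd0|split; [bd0|split]].
      * rewrite (cca (a ▷ b)) by bd0. rewrite <- (cca a b (inv b)) by bd0.
        rewrite inv_l by assumption. rewrite cc_idr by bd0. rewrite inv_l by assumption. bd0.
      * rewrite (cca (inv b ▷ inv a)) by bd0. rewrite <- (cca (inv b) (inv a) a) by bd0.
        rewrite inv_r by assumption. rewrite cc_idr by bd0. rewrite inv_r by assumption. bd0.
Qed.


Lemma iso_ch a b : cright a = cleft b -> globular_iso a -> globular_iso b -> globular_iso (a ⊙ b).
Proof.
  intros E Ha Hb. gfacts a Ha La Ra Da Ca. gfacts b Hb Lb Rb Db Cb.
  assert (M : hcod (csrc a) = hdom (csrc b)).
  { rewrite Ra, Lb in E. apply (f_equal vdom) in E. rewrite !vdom_vid in E. exact E. }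
  split.
  - split; bdn.
    + rewrite La. reflexivity.
    + rewrite Rb. reflexivity.
  - exists (inv a ⊙ inv b). destruct (inv_spec a Ha) as [[I1 I2] _]. destruct (inv_spec b Hb) as [[J1 J2] _].
    split; [split|].
    + bdn. rewrite La, Da. reflexivity.
    + bdn. rewrite Rb, Cb. reflexivity.
    + split; [bd0|split; [bd0|split]].
      * rewrite <- ich by bd0. rewrite !inv_l by assumption.
        rewrite (chcomp_cid D HD) by exact M. bd0.
      * rewrite <- ich by bd0. rewrite !inv_r by assumption.
        rewrite (chcomp_cid D HD) by (rewrite Ca, Db; exact M). bd0.
Qed.

Lemma iso_cid J : globular_iso (cid J).
Proof.
  split; [split; bd0|]. exists (cid J). split; [split; bd0|].
  split; [bd0|split;[bd0|split]]; rewrite cc_idl; bd0.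
Qed.

Lemma iso_inv a : globular_iso a -> globular_iso (inv a).
Proof.
  intro Ha. destruct (inv_spec a Ha) as [G [I1 [I2 [I3 I4]]]].
  split; [exact G|]. exists a. split; [exact (proj1 Ha)|].
  split; [bd0|split;[bd0|split]].
  - rewrite I4. bd0.
  - rewrite I3. bd0.
Qed.

Lemma iso_as J K L : hcod J = hdom K -> hcod K = hdom L -> globular_iso (assoc J K L).
Proof. intros. apply (assoc_iso D HD); auto. Qed.
Lemma iso_lu J : globular_iso (lunitor J).
Proof. apply (lunitor_iso D HD). Qed.
Lemma iso_ru J : globular_iso (runitor J).
Proof. apply (runitor_iso D HD). Qed.

Context (T : LaxData D) (HT : IsNormalLax T).

Lemma csrc_FC a : csrc (FC T a) = FH T (csrc a). Proof. apply (FC_bd T HT). Qed.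
Lemma ctgt_FC a : ctgt (FC T a) = FH T (ctgt a). Proof. apply (FC_bd T HT). Qed.
Lemma cleft_FC a : cleft (FC T a) = FV T (cleft a). Proof. apply (FC_bd T HT). Qed.
Lemma cright_FC a : cright (FC T a) = FV T (cright a). Proof. apply (FC_bd T HT). Qed.
Lemma hdom_FH J : hdom (FH T J) = FO T (hdom J). Proof. apply (FH_dom T HT). Qed.
Lemma hcod_FH J : hcod (FH T J) = FO T (hcod J). Proof. apply (FH_cod T HT). Qed.
Lemma vdom_FV f : vdom (FV T f) = FO T (vdom f). Proof. apply (FV_dom T HT). Qed.
Lemma vcod_FV f : vcod (FV T f) = FO T (vcod f). Proof. apply (FV_cod T HT). Qed.
Lemma FH_hu A : FH T (hunit A) = hunit (FO T A). Proof. apply (FH_hunit T HT). Qed.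
Lemma FV_vi A : FV T (vid A) = vid (FO T A). Proof. apply (FV_vid T HT). Qed.
Lemma FV_vc f g : vcod f = vdom g -> FV T (vcomp g f) = vcomp (FV T g) (FV T f).
Proof. apply (FV_vcomp T HT). Qed.
Lemma csrc_Fc J K : hcod J = hdom K -> csrc (Fcomp T J K) = hcomp (FH T J) (FH T K).
Proof. intro H. apply (Fcomp_bd T HT J K H). Qed.
Lemma ctgt_Fc J K : hcod J = hdom K -> ctgt (Fcomp T J K) = FH T (hcomp J K).
Proof. intro H. apply (Fcomp_bd T HT J K H). Qed.
Lemma cleft_Fc J K : hcod J = hdom K -> cleft (Fcomp T J K) = vid (FO T (hdom J)).
Proof. intro H. apply (Fcomp_bd T HT J K H). Qed.
Lemma cright_Fc J K : hcod J = hdom K -> cright (Fcomp T J K) = vid (FO T (hcod K)).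
Proof. intro H. apply (Fcomp_bd T HT J K H). Qed.

Context (iotaO : ob D -> ver D) (iotaH : hor D -> cell D)
  (Hi : IsDoubleTransformation (idLax D) T iotaO iotaH).

Lemma csrc_io J : csrc (iotaH J) = J. Proof. apply (tr_bd _ _ _ _ Hi J). Qed.
Lemma ctgt_io J : ctgt (iotaH J) = FH T J. Proof. apply (tr_bd _ _ _ _ Hi J). Qed.
Lemma cleft_io J : cleft (iotaH J) = iotaO (hdom J). Proof. apply (tr_bd _ _ _ _ Hi J). Qed.
Lemma cright_io J : cright (iotaH J) = iotaO (hcod J). Proof. apply (tr_bd _ _ _ _ Hi J). Qed.
Lemma vdom_io A : vdom (iotaO A) = A. Proof. apply (tr_dom _ _ _ _ Hi A). Qed.
Lemma vcod_io A : vcod (iotaO A) = FO T A. Proof. apply (tr_cod _ _ _ _ Hi A). Qed.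

Lemma iso_FC a : globular_iso a -> globular_iso (FC T a).
Proof.
  intro Ha. gfacts a Ha La Ra Da Ca. destruct (inv_spec a Ha) as [[I1 I2] [E1 [E2 [E3 E4]]]].
  split.
  - split; bdn.
    + rewrite cleft_FC, La, FV_vi, csrc_FC, hdom_FH. reflexivity.
    + rewrite cright_FC, Ra, FV_vi, csrc_FC, hcod_FH. reflexivity.
  - exists (FC T (inv a)). split; [split|].
    + rewrite cleft_FC, csrc_FC, I1, FV_vi, hdom_FH. reflexivity.
    + rewrite cright_FC, csrc_FC, I2, FV_vi, hcod_FH. reflexivity.
    + split; [rewrite ctgt_FC, csrc_FC, E1; reflexivity|split; [rewrite ctgt_FC, csrc_FC, E2; reflexivity|split]].
      * rewrite <- (FC_ccomp T HT) by (symmetry; exact E1). rewrite E3, (FC_cid T HT), csrc_FC. reflexivity.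
      * rewrite <- (FC_ccomp T HT) by exact E2. rewrite E4, (FC_cid T HT), ctgt_FC. reflexivity.
Qed.

Ltac isot :=
  first [ assumption | apply iso_cid | apply iso_lu | apply iso_ru
        | apply iso_inv; isot | apply iso_FC; isot
        | apply iso_as; bd | apply iso_cc; [bd|isot|isot] | apply iso_ch; [bd|isot|isot] ]
with bdn1 :=
  repeat first
   [ rewrite csrc_cid | rewrite ctgt_cid | rewrite cleft_cid | rewrite cright_cid
   | rewrite csrc_cu | rewrite ctgt_cu | rewrite cleft_cu | rewrite cright_cu
   | rewrite csrc_lu | rewrite ctgt_lu | rewrite cleft_lu | rewrite cright_lu
   | rewrite csrc_ru | rewrite ctgt_ru | rewrite cleft_ru | rewrite cright_ru
   | rewrite hdom_hu | rewrite hcod_hu | rewrite vdom_vid | rewrite vcod_vid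
   | rewrite csrc_FC | rewrite ctgt_FC | rewrite cleft_FC | rewrite cright_FC
   | rewrite hdom_FH | rewrite hcod_FH | rewrite vdom_FV | rewrite vcod_FV
   | rewrite FH_hu | rewrite FV_vi
   | rewrite csrc_io | rewrite ctgt_io | rewrite cleft_io | rewrite cright_io
   | rewrite vdom_io | rewrite vcod_io
   | rewrite csrc_cc by bd | rewrite ctgt_cc by bd | rewrite cleft_cc by bd | rewrite cright_cc by bd
   | rewrite csrc_ch by bd | rewrite ctgt_ch by bd | rewrite cleft_ch by bd | rewrite cright_ch by bd
   | rewrite csrc_as by bd | rewrite ctgt_as by bd | rewrite cleft_as by bd | rewrite cright_as by bd
   | rewrite csrc_Fc by bd | rewrite ctgt_Fc by bd | rewrite cleft_Fc by bd | rewrite cright_Fc by bd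
   | rewrite hdom_hc by bd | rewrite hcod_hc by bd | rewrite vdom_vc by bd | rewrite vcod_vc by bd
   | rewrite vc_idl by bd | rewrite vc_idr by bd | rewrite FV_vc by bd
   | rewrite csrc_inv by isot | rewrite ctgt_inv by isot
   | rewrite cleft_inv by isot | rewrite cright_inv by isot
   | match goal with H : cleft ?x = ?t |- context [cleft ?x] => is_var x; rewrite H end
   | match goal with H : cright ?x = ?t |- context [cright ?x] => is_var x; rewrite H end
   | match goal with H : csrc ?x = ?t |- context [csrc ?x] => is_var x; rewrite H end
   | match goal with H : ctgt ?x = ?t |- context [ctgt ?x] => is_var x; rewrite H end ]
with bd := bdn1; first [reflexivity | congruence].

Ltac sc := match goal with |- globular_iso _ => isot | _ => bd end.


Lemma cancel_l a x y : globular_iso a -> ctgt a = csrc x -> ctgt a = csrc y -> a ▷ x = a ▷ y -> x = y.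
Proof.
  intros Ha Ex Ey E.
  rewrite <- (cc_idl x (ctgt a)) by (symmetry; exact Ex).
  rewrite <- (cc_idl y (ctgt a)) by (symmetry; exact Ey).
  rewrite <- !inv_r by exact Ha.
  rewrite <- !cca by sc. rewrite E. reflexivity.
Qed.
Lemma cancel_r a x y : globular_iso a -> ctgt x = csrc a -> ctgt y = csrc a -> x ▷ a = y ▷ a -> x = y.
Proof.
  intros Ha Ex Ey E.
  rewrite <- (cc_idr x (csrc a)) by exact Ex.
  rewrite <- (cc_idr y (csrc a)) by exact Ey.
  rewrite <- !inv_l by exact Ha.
  rewrite !cca by sc. rewrite E. reflexivity.
Qed.

Lemma cancel_lw A p q : cleft p = vid A -> cleft q = vid A -> csrc p = csrc q -> ctgt p = ctgt q ->
  cid (hunit A) ⊙ p = cid (hunit A) ⊙ q -> p = q.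
Proof.
  intros Lp Lq Sp Tp E.
  pose proof (lunitor_nat D HD p) as Np. pose proof (lunitor_nat D HD q) as Nq.
  rewrite Lp, (cunit_vid D HD) in Np. rewrite Lq, (cunit_vid D HD) in Nq.
  rewrite <- E, <- Tp, <- Sp in Nq. rewrite Nq in Np.
  apply cancel_l in Np; [symmetry; exact Np | sc | sc | sc].
Qed.

Lemma cancel_rw B p q : cright p = vid B -> cright q = vid B -> csrc p = csrc q -> ctgt p = ctgt q ->
  p ⊙ cid (hunit B) = q ⊙ cid (hunit B) -> p = q.
Proof.
  intros Lp Lq Sp Tp E.
  pose proof (runitor_nat D HD p) as Np. pose proof (runitor_nat D HD q) as Nq.
  rewrite Lp, (cunit_vid D HD) in Np. rewrite Lq, (cunit_vid D HD) in Nq.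
  rewrite <- E, <- Tp, <- Sp in Nq. rewrite Nq in Np.
  apply cancel_l in Np; [symmetry; exact Np | sc | sc | sc].
Qed.

Lemma K1 X : lunitor (hcomp (hunit (hdom X)) X) = cid (hunit (hdom X)) ⊙ lunitor X.
Proof.
  pose proof (lunitor_nat D HD (lunitor X)) as N.
  rewrite cleft_lu, ctgt_lu, csrc_lu, (cunit_vid D HD) in N.
  symmetry. apply cancel_r with (a := lunitor X); sc.
Qed.


Lemma ich_l J x y : ctgt x = csrc y -> cleft x = vid (hcod J) -> cleft y = vid (hcod J) ->
  cid J ⊙ (x ▷ y) = (cid J ⊙ x) ▷ (cid J ⊙ y).
Proof. intros. rewrite <- ich by sc. rewrite cc_idl by sc. reflexivity. Qed.
Lemma ich_r J x y : ctgt x = csrc y -> cright x = vid (hdom J) -> cright y = vid (hdom J) ->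
  (x ▷ y) ⊙ cid J = (x ⊙ cid J) ▷ (y ⊙ cid J).
Proof. intros. rewrite <- ich by sc. rewrite cc_idl by sc. reflexivity. Qed.

Lemma K2 X Y : hcod X = hdom Y ->
  assoc (hunit (hdom X)) X Y ▷ lunitor (hcomp X Y) = lunitor X ⊙ cid Y.
Proof.
  intro H.
  pose proof (pentagon D HD (hunit (hdom X)) (hunit (hdom X)) X Y) as P.
  rewrite !hcod_hu, !hdom_hu in P. specialize (P eq_refl eq_refl H).
  pose proof (triangle D HD (hunit (hdom X)) (hcomp X Y)) as T1.
  rewrite hcod_hu in T1. specialize (T1 ltac:(sc)).
  pose proof (triangle D HD (hunit (hdom X)) X) as T2.
  rewrite hcod_hu in T2. specialize (T2 ltac:(sc)).
  pose proof (assoc_nat D HD (runitor (hunit (hdom X))) (cid X) (cid Y)) as N1.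
  rewrite ctgt_ru, !ctgt_cid, csrc_ru, !csrc_cid, hcod_hu in N1.
  specialize (N1 ltac:(sc) ltac:(sc)).
  rewrite (chcomp_cid D HD) in N1 by exact H.
  pose proof (assoc_nat D HD (cid (hunit (hdom X))) (lunitor X) (cid Y)) as N2.
  rewrite !ctgt_cid, ctgt_lu, !csrc_cid, csrc_lu in N2.
  specialize (N2 ltac:(sc) ltac:(sc)).
  apply (cancel_lw (hdom X)); [sc|sc|sc|sc|].
  apply (cancel_l ((assoc (hunit (hdom X)) (hunit (hdom X)) X ⊙ cid Y)
                    ▷ assoc (hunit (hdom X)) (hcomp (hunit (hdom X)) X) Y)); [sc|sc|sc|].
  transitivity (((runitor (hunit (hdom X)) ⊙ cid X) ⊙ cid Y) ▷ assoc (hunit (hdom X)) X Y).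
  - rewrite ich_l by sc. rewrite cca by sc. rewrite <- P. rewrite <- cca by sc.
    rewrite T1. rewrite <- N1. reflexivity.
  - rewrite <- cca by sc. rewrite <- N2. rewrite cca by sc. rewrite <- ich_r by sc.
    rewrite T2. reflexivity.
Qed.


Lemma K3 A : lunitor (hunit A) = runitor (hunit A).
Proof.
  pose proof (triangle D HD (hunit A) (hunit A)) as Tr. rewrite !hcod_hu, hdom_hu in Tr.
  specialize (Tr eq_refl).
  pose proof (K1 (hunit A)) as E1. rewrite hdom_hu in E1.
  pose proof (K2 (hunit A) (hunit A)) as E2. rewrite !hdom_hu, hcod_hu in E2. specialize (E2 eq_refl).
  rewrite E1, Tr in E2.
  apply (cancel_rw A); sc.
Qed.

Lemma K4 X Y : hcod X = hdom Y ->
  assoc X Y (hunit (hcod Y)) ▷ (cid X ⊙ runitor Y) = runitor (hcomp X Y).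
Proof.
  intro H.
  pose proof (pentagon D HD X Y (hunit (hcod Y)) (hunit (hcod Y))) as P.
  rewrite !hcod_hu, !hdom_hu in P. specialize (P H eq_refl eq_refl).
  pose proof (triangle D HD Y (hunit (hcod Y))) as T1. rewrite hdom_hu in T1. specialize (T1 eq_refl).
  pose proof (triangle D HD (hcomp X Y) (hunit (hcod Y))) as T2.
  rewrite (hcod_hc X Y H), hdom_hu in T2. specialize (T2 eq_refl).
  pose proof (assoc_nat D HD (cid X) (cid Y) (lunitor (hunit (hcod Y)))) as Na.
  rewrite !ctgt_cid, ctgt_lu, !csrc_cid, csrc_lu, hdom_hu in Na.
  specialize (Na ltac:(sc) ltac:(sc)).
  rewrite (chcomp_cid D HD) in Na by exact H.
  pose proof (assoc_nat D HD (cid X) (runitor Y) (cid (hunit (hcod Y)))) as Nb.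
  rewrite !ctgt_cid, ctgt_ru, !csrc_cid, csrc_ru in Nb.
  specialize (Nb ltac:(sc) ltac:(sc)).
  apply (cancel_rw (hcod Y)); [sc|sc|sc|sc|].
  apply (cancel_r (assoc X Y (hunit (hcod Y)))); [sc|sc|sc|].
  transitivity ((assoc X Y (hunit (hcod Y)) ⊙ cid (hunit (hcod Y)))
     ▷ assoc X (hcomp Y (hunit (hcod Y))) (hunit (hcod Y))
     ▷ (cid X ⊙ (runitor Y ⊙ cid (hunit (hcod Y))))).
  - rewrite ich_r by sc. rewrite <- cca by sc. rewrite Nb. rewrite !cca by sc. reflexivity.
  - symmetry. rewrite <- T2. rewrite <- cca by sc.
    rewrite Na. rewrite cca by sc. rewrite P. rewrite <- (cca _ (cid X ⊙ assoc Y (hunit (hcod Y)) (hunit (hcod Y)))) by sc.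
    rewrite <- ich_l by sc. rewrite T1. reflexivity.
Qed.


Lemma nat_inv a b x y : globular_iso a -> globular_iso b -> ctgt x = csrc b -> ctgt a = csrc y ->
  csrc x = csrc a -> ctgt y = ctgt b -> x ▷ b = a ▷ y -> inv a ▷ x = y ▷ inv b.
Proof.
  intros Ha Hb E1 E2 E3 E4 E.
  transitivity (inv a ▷ x ▷ b ▷ inv b).
  - rewrite <- (cca (inv a ▷ x) b (inv b)) by sc. rewrite inv_l by exact Hb.
    rewrite cc_idr by sc. reflexivity.
  - rewrite <- (cca (inv a) x b) by sc. rewrite E. rewrite (cca (inv a) a y) by sc.
    rewrite inv_r by exact Ha. rewrite cc_idl by sc. reflexivity.
Qed.

Lemma lu_inv_nat x : inv (lunitor (csrc x)) ▷ (cunit (cleft x) ⊙ x) = x ▷ inv (lunitor (ctgt x)).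
Proof. destruct (cell_bd D HD x) as [? [? [? ?]]]. apply nat_inv; try sc. apply (lunitor_nat D HD). Qed.
Lemma ru_inv_nat x : inv (runitor (csrc x)) ▷ (x ⊙ cunit (cright x)) = x ▷ inv (runitor (ctgt x)).
Proof. destruct (cell_bd D HD x) as [? [? [? ?]]]. apply nat_inv; try sc. apply (runitor_nat D HD). Qed.

Lemma conj_zig gam g eta :
  ctgt gam = hunit (vcod g) -> cleft gam = vid (vcod g) -> cright gam = g -> cartesian gam ->
  csrc eta = hunit (vdom g) -> ctgt eta = csrc gam -> cleft eta = g -> cright eta = vid (vdom g) ->
  eta ▷ gam = cunit g -> (gam ⊙ eta) ▷ lunitor (csrc gam) = runitor (csrc gam).
Proof.
  intros T1 L1 R1 C1 S2 T2 L2 R2 E.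
  assert (HdG : hdom (csrc gam) = vcod g).
  { destruct (cell_bd D HD gam) as [X1 _]. rewrite X1, L1. sc. }
  assert (HcG : hcod (csrc gam) = vdom g).
  { destruct (cell_bd D HD gam) as [_ [X1 _]]. rewrite X1, R1. reflexivity. }
  destruct (C1 (runitor (csrc gam) ▷ gam) (vid (vcod g)) (vid (vdom g))) as [t [_ U]];
    [sc..|].
  transitivity t; [symmetry|]; apply U; (split; [unfold IsCell; repeat split; sc|]).
  - rewrite <- (cca _ (lunitor (csrc gam)) gam) by sc.
    pose proof (lunitor_nat D HD gam) as N. rewrite <- N. rewrite L1, (cunit_vid D HD).
    rewrite cca by sc. rewrite <- ich by sc. rewrite E, cc_idr by sc. rewrite T1, K3.
    pose proof (runitor_nat D HD gam) as N2. rewrite R1, T1 in N2. exact N2.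
  - reflexivity.
Qed.


Lemma comp_zig cD f th :
  ctgt cD = hunit (vcod f) -> cleft cD = f -> cright cD = vid (vcod f) -> cartesian cD ->
  csrc th = hunit (vdom f) -> ctgt th = csrc cD -> cleft th = vid (vdom f) -> cright th = f ->
  th ▷ cD = cunit f -> (th ⊙ cD) ▷ runitor (csrc cD) = lunitor (csrc cD).
Proof.
  intros T1 L1 R1 C1 S2 T2 L2 R2 E.
  assert (HdG : hdom (csrc cD) = vdom f).
  { destruct (cell_bd D HD cD) as [X1 _]. rewrite X1, L1. reflexivity. }
  assert (HcG : hcod (csrc cD) = vcod f).
  { destruct (cell_bd D HD cD) as [_ [X1 _]]. rewrite X1, R1. sc. }
  destruct (C1 (lunitor (csrc cD) ▷ cD) (vid (vdom f)) (vid (vcod f))) as [t [_ U]];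
    [sc..|].
  transitivity t; [symmetry|]; apply U; (split; [unfold IsCell; repeat split; sc|]).
  - rewrite <- (cca _ (runitor (csrc cD)) cD) by sc.
    pose proof (runitor_nat D HD cD) as N. rewrite <- N. rewrite R1, (cunit_vid D HD).
    rewrite cca by sc. rewrite <- ich by sc. rewrite E, cc_idr by sc. rewrite T1, <- K3.
    pose proof (lunitor_nat D HD cD) as N2. rewrite L1, T1 in N2. exact N2.
  - reflexivity.
Qed.

Lemma comp_opcart cD f th :
  ctgt cD = hunit (vcod f) -> cleft cD = f -> cright cD = vid (vcod f) -> cartesian cD ->
  csrc th = hunit (vdom f) -> ctgt th = csrc cD -> cleft th = vid (vdom f) -> cright th = f ->
  th ▷ cD = cunit f -> opcartesian th.
Proof.
  intros T1 L1 R1 C1 S2 T2 L2 R2 E.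
  pose proof (comp_zig cD f th T1 L1 R1 C1 S2 T2 L2 R2 E) as Z.
  assert (HdG : hdom (csrc cD) = vdom f).
  { destruct (cell_bd D HD cD) as [X1 _]. rewrite X1, L1. reflexivity. }
  assert (HcG : hcod (csrc cD) = vcod f).
  { destruct (cell_bd D HD cD) as [_ [X1 _]]. rewrite X1, R1. sc. }
  unfold opcartesian. intros psi h k S Lh Lk Lp Rp.
  rewrite T2, L2, R2, vcod_vid in *. rewrite S2 in S.
  rewrite (vc_idr h (vdom f) Lh) in Lp.
  assert (HdP : hcod (csrc psi) = vdom f) by (rewrite S; sc).
  assert (HcP : hcod (ctgt psi) = vcod k).
  { destruct (cell_bd D HD psi) as [_ [_ [_ X1]]]. rewrite X1, Rp. sc. }
  assert (HeP : hdom (ctgt psi) = vcod h).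
  { destruct (cell_bd D HD psi) as [_ [_ [X1 _]]]. rewrite X1, Lp. reflexivity. }
  assert (Key : forall t', IsCell t' (csrc cD) (ctgt psi) h k ->
     t' = inv (lunitor (csrc cD)) ▷ ((th ▷ t') ⊙ (cD ▷ cunit k)) ▷ runitor (ctgt psi)).
  { intros t' [A1 [A2 [A3 A4]]].
    rewrite ich by sc.
    rewrite (cca (inv (lunitor (csrc cD))) (th ⊙ cD)) by sc.
    rewrite <- (cca (inv (lunitor (csrc cD)) ▷ (th ⊙ cD))) by sc.
    pose proof (runitor_nat D HD t') as N. rewrite A4, A2, A1 in N. rewrite N.
    rewrite cca by sc. rewrite <- (cca (inv (lunitor (csrc cD)))) by sc.
    rewrite Z. rewrite inv_r by sc.
    rewrite cc_idl by sc. reflexivity. }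
  exists (inv (lunitor (csrc cD)) ▷ (psi ⊙ (cD ▷ cunit k)) ▷ runitor (ctgt psi)).
  split.
  - split; [unfold IsCell; repeat split; sc|].
    pose proof (lu_inv_nat th) as L. rewrite T2, S2, L2, (cunit_vid D HD) in L.
    rewrite !cca by sc. rewrite <- L.
    rewrite <- (cca (inv (lunitor (hunit (vdom f))))) by sc.
    rewrite <- ich by sc. rewrite cc_idl by sc. rewrite cca by sc. rewrite E.
    rewrite <- (cunit_vcomp D HD) by sc. rewrite <- Rp.
    rewrite <- cca by sc. rewrite (runitor_nat D HD psi). rewrite S.
    rewrite cca by sc. rewrite <- K3. rewrite inv_r by sc. rewrite cc_idl by sc. reflexivity.
  - intros t' [Ht' Et']. rewrite (Key t' Ht'). rewrite Et'. reflexivity.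
Qed.


Lemma u_id J gam g eta :
  hcod J = vcod g ->
  ctgt gam = hunit (vcod g) -> cleft gam = vid (vcod g) -> cright gam = g ->
  hdom (csrc gam) = vcod g -> hcod (csrc gam) = vdom g ->
  csrc eta = hunit (vdom g) -> ctgt eta = csrc gam -> cleft eta = g -> cright eta = vid (vdom g) ->
  (gam ⊙ eta) ▷ lunitor (csrc gam) = runitor (csrc gam) ->
  ((cid J ⊙ gam) ▷ runitor J) ⊙ eta = runitor (hcomp J (csrc gam)).
Proof.
  intros HJ T1 L1 R1 DG CG S2 T2 L2 R2 Z.
  rewrite <- (cc_idr eta (csrc gam)) by exact T2.
  rewrite ich by sc.
  pose proof (triangle D HD J (csrc gam)) as Tr. rewrite HJ in Tr. specialize (Tr ltac:(sc)).
  rewrite <- Tr.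
  pose proof (assoc_nat D HD (cid J) gam eta) as N. rewrite !ctgt_cid, !csrc_cid, T1, T2, S2 in N.
  specialize (N ltac:(sc) ltac:(sc)).
  rewrite cca by sc. rewrite N. rewrite <- cca by sc. rewrite <- ich_l by sc.
  rewrite Z. rewrite <- CG. apply K4. sc.
Qed.

Lemma Z1T gam g eta :
  ctgt gam = hunit (vcod g) -> cleft gam = vid (vcod g) -> cright gam = g ->
  hdom (csrc gam) = vcod g -> hcod (csrc gam) = vdom g ->
  csrc eta = hunit (vdom g) -> ctgt eta = csrc gam -> cleft eta = g -> cright eta = vid (vdom g) ->
  (gam ⊙ eta) ▷ lunitor (csrc gam) = runitor (csrc gam) ->
  (FC T gam ⊙ FC T eta) ▷ lunitor (FH T (csrc gam)) = runitor (FH T (csrc gam)).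
Proof.
  intros T1 L1 R1 DG CG S2 T2 L2 R2 Z.
  rewrite <- (Fcomp_lunit T HT (csrc gam)). rewrite cca by sc.
  pose proof (Fcomp_nat T HT gam eta) as N. rewrite T1, T2, S2 in N. specialize (N ltac:(sc)).
  rewrite DG. rewrite N. rewrite <- cca by sc. rewrite <- (FC_ccomp T HT) by sc.
  rewrite Z. rewrite <- CG. apply (Fcomp_runit T HT).
Qed.

Lemma comp_iso K gam g eta :
  hcod K = vcod g ->
  ctgt gam = hunit (vcod g) -> cleft gam = vid (vcod g) -> cright gam = g ->
  hdom (csrc gam) = vcod g -> hcod (csrc gam) = vdom g ->
  csrc eta = hunit (vdom g) -> ctgt eta = csrc gam -> cleft eta = g -> cright eta = vid (vdom g) ->
  (gam ⊙ eta) ▷ lunitor (csrc gam) = runitor (csrc gam) ->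
  globular_iso (Fcomp T K (csrc gam)).
Proof.
  intros HK T1 L1 R1 DG CG S2 T2 L2 R2 Z.
  pose proof (u_id K gam g eta HK T1 L1 R1 DG CG S2 T2 L2 R2 Z) as U0.
  assert (ZT := Z1T gam g eta T1 L1 R1 DG CG S2 T2 L2 R2 Z).
  assert (U1 : ((cid (FH T K) ⊙ FC T gam) ▷ runitor (FH T K)) ⊙ FC T eta
               = runitor (hcomp (FH T K) (FH T (csrc gam)))).
  { rewrite <- csrc_FC. apply (u_id _ _ (FV T g)); try sc; rewrite ?csrc_FC; exact ZT. }
  split; [split; sc|].
  exists (inv (runitor (FH T (hcomp K (csrc gam))))
          ▷ (FC T ((cid K ⊙ gam) ▷ runitor K) ⊙ FC T eta)).
  split; [split; sc|]. split; [sc|split; [sc|split]].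
  - rewrite cca by sc.
    pose proof (ru_inv_nat (Fcomp T K (csrc gam))) as N. rewrite cright_Fc, ctgt_Fc, csrc_Fc in N by sc.
    rewrite <- N. rewrite (cunit_vid D HD). rewrite <- cca by sc.
    rewrite <- ich by sc. rewrite (FC_ccomp T HT) by sc. rewrite cca by sc.
    pose proof (Fcomp_nat T HT (cid K) gam) as N2. rewrite !ctgt_cid, !csrc_cid, T1 in N2.
    specialize (N2 ltac:(sc)). rewrite <- N2. rewrite (FC_cid T HT).
    rewrite <- cca by sc. rewrite <- HK. rewrite (Fcomp_runit T HT). rewrite cc_idl by sc.
    rewrite U1. rewrite inv_r by sc. sc.
  - rewrite <- cca by sc.
    pose proof (Fcomp_nat T HT ((cid K ⊙ gam) ▷ runitor K) eta) as N.
    rewrite ctgt_cc, ctgt_ru, csrc_cc, csrc_ch, csrc_cid, T2, S2 in N by sc.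
    specialize (N ltac:(sc)). rewrite N. rewrite U0. rewrite <- CG.
    rewrite <- (hcod_hc K (csrc gam)) by sc. rewrite (Fcomp_runit T HT).
    rewrite inv_r by sc. sc.
Qed.


Lemma sigma_iso K g rho gam eta :
  vcod g = hcod K ->
  ctgt rho = K -> cleft rho = vid (hdom K) -> cright rho = g -> cartesian rho ->
  ctgt gam = hunit (vcod g) -> cleft gam = vid (vcod g) -> cright gam = g ->
  hdom (csrc gam) = vcod g -> hcod (csrc gam) = vdom g ->
  csrc eta = hunit (vdom g) -> ctgt eta = csrc gam -> cleft eta = g -> cright eta = vid (vdom g) ->
  eta ▷ gam = cunit g ->
  (gam ⊙ eta) ▷ lunitor (csrc gam) = runitor (csrc gam) ->
  exists s, globular_iso s /\ csrc s = hcomp K (csrc gam) /\ ctgt s = csrc rho.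
Proof.
  intros HK T0 L0 R0 C0 T1 L1 R1 DG CG S2 T2 L2 R2 E Z.
  assert (DR : hdom (csrc rho) = hdom K).
  { destruct (cell_bd D HD rho) as [X1 _]. rewrite X1, L0. sc. }
  assert (CR : hcod (csrc rho) = vdom g).
  { destruct (cell_bd D HD rho) as [_ [X1 _]]. rewrite X1, R0. reflexivity. }
  pose proof (u_id K gam g eta (eq_sym HK) T1 L1 R1 DG CG S2 T2 L2 R2 Z) as U0.
  destruct (C0 ((cid K ⊙ gam) ▷ runitor K) (vid (hdom K)) (vid (vdom g))) as [s [[[S3 [T3 [L3 R3]]] E3] U]];
    [sc..|].
  assert (Gs : globular s) by (split; sc).
  assert (Iso : globular_iso s).
  { split; [exact Gs|].
    exists (inv (runitor (csrc rho)) ▷ (rho ⊙ eta)).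
    split; [split; sc|]. split; [sc|split; [sc|split]].
    - rewrite cca by sc. pose proof (ru_inv_nat s) as N. rewrite R3, T3, (cunit_vid D HD) in N.
      rewrite <- N. rewrite <- cca by sc. rewrite <- ich by sc. rewrite E3.
      rewrite cc_idl by sc. rewrite U0. rewrite S3. replace (csrc ((cid K ⊙ gam) ▷ runitor K)) with (hcomp K (csrc gam)) by sc. rewrite inv_r by sc. sc.
    - assert (Uq : forall t, IsCell t (csrc rho) (csrc rho) (vid (hdom K)) (vid (vdom g)) /\ t ▷ rho = rho -> t = cid (csrc rho)).
      { intros t Ht. pose proof (U t) as Ut.
        destruct (C0 rho (vid (hdom K)) (vid (vdom g))) as [u [_ V]]; [sc..|].
        transitivity u; [symmetry; apply V; exact Ht|]. apply V.
        split; [unfold IsCell; repeat split; sc|]. rewrite cc_idl by sc. reflexivity. }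
      rewrite T3. apply Uq. split; [unfold IsCell; repeat split; sc|].
      rewrite <- cca by sc. rewrite E3.
      rewrite (cca (inv (runitor (csrc rho)) ▷ (rho ⊙ eta))) by sc.
      rewrite <- (cca (inv (runitor (csrc rho))) (rho ⊙ eta)) by sc.
      rewrite <- ich by sc. rewrite E.
      rewrite cc_idr by sc. rewrite <- cca by sc.
      pose proof (runitor_nat D HD rho) as N. rewrite T0, R0 in N. rewrite N.
      rewrite cca by sc. rewrite inv_r by sc. rewrite cc_idl by sc. reflexivity. }
  exists s. split; [exact Iso|]. split; [rewrite S3; sc|exact T3].
Qed.


Lemma iso_by_nat a b x y : globular_iso a -> globular_iso b -> globular_iso y ->
  ctgt x = csrc b -> ctgt a = csrc y -> x ▷ b = a ▷ y -> globular_iso x.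
Proof.
  intros Ha Hb Hy E1 E2 E.
  assert (Et : ctgt y = ctgt b).
  { rewrite <- (ctgt_cc a y) by exact E2. rewrite <- (ctgt_cc x b) by exact E1. rewrite E. reflexivity. }
  assert (Ex : x = a ▷ y ▷ inv b).
  { rewrite <- (cc_idr x (csrc b)) at 1 by exact E1. rewrite <- (inv_l b Hb).
    rewrite cca by sc. rewrite E. reflexivity. }
  rewrite Ex. sc.
Qed.

Lemma iso_by_nat2 a b x y : globular_iso a -> globular_iso b -> globular_iso x ->
  ctgt x = csrc b -> ctgt a = csrc y -> x ▷ b = a ▷ y -> globular_iso y.
Proof.
  intros Ha Hb Hx E1 E2 E.
  assert (Es : csrc x = csrc a).
  { rewrite <- (csrc_cc a y) by exact E2. rewrite <- (csrc_cc x b) by exact E1. rewrite E. reflexivity. }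
  assert (Ey : y = inv a ▷ x ▷ b).
  { rewrite <- cca by sc. rewrite E. rewrite cca by sc. rewrite inv_r by exact Ha.
    rewrite cc_idl by sc. reflexivity. }
  rewrite Ey. sc.
Qed.


Lemma main_lemma (HE : IsEquipment D) (K : hor D) (g : ver D) (HgK : vcod g = hcod K)
  (R : hor D) (rho : cell D) (Hrho : IsCell rho R K (vid (hdom K)) g) (Hcart : cartesian rho)
  (HBC_K : RightBC T iotaO iotaH K)
  (HBC_g : forall (G : hor D) (gamma : cell D),
      IsCell gamma G (hunit (vcod g)) (vid (vcod g)) g -> cartesian gamma ->
      RightBC T iotaO iotaH G) :
  RightBC T iotaO iotaH R.
Proof.
  intros EC oC EB cB HoC OoC HcB CcB.
  destruct Hrho as [S0 [T0 [L0 R0]]]. subst R.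
  assert (DR : hdom (csrc rho) = hdom K).
  { destruct (cell_bd D HD rho) as [X1 _]. rewrite X1, L0. sc. }
  assert (CR : hcod (csrc rho) = vdom g).
  { destruct (cell_bd D HD rho) as [_ [X1 _]]. rewrite X1, R0. reflexivity. }
  rewrite DR in HoC. rewrite CR in HcB.
  assert (F1 : hdom EC = hdom K /\ hcod EC = FO T (hdom K)).
  { destruct HoC as [So [To [Lo Ro]]]. destruct (cell_bd D HD oC) as [_ [_ [X1 X2]]].
    rewrite To, Lo, Ro in *. rewrite X1, X2. split; sc. }
  assert (F2 : hdom EB = vdom g /\ hcod EB = FO T (vdom g)).
  { destruct HcB as [Sb [Tb [Lb Rb]]]. destruct (cell_bd D HD cB) as [X1 [X2 _]].
    rewrite Sb, Lb, Rb in *. rewrite X1, X2. split; sc. }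
  destruct F1 as [F1a F1b]. destruct F2 as [F2a F2b].
  destruct HoC as [So [To [Lo Ro]]]. destruct HcB as [Sb [Tb [Lb Rb]]].
  destruct (HE g) as [_ [G [gam [[Sg [Tg [Lg Rg]]] Cg]]]].
  subst G.
  assert (DG : hdom (csrc gam) = vcod g).
  { destruct (cell_bd D HD gam) as [X1 _]. rewrite X1, Lg. sc. }
  assert (CG : hcod (csrc gam) = vdom g).
  { destruct (cell_bd D HD gam) as [_ [X1 _]]. rewrite X1, Rg. reflexivity. }
  destruct (Cg (cunit g) g (vid (vdom g))) as [eta [[[Se [Te [Le Re]]] Ee] _]]; [sc..|].
  rewrite csrc_cu in Se.
  pose proof (conj_zig gam g eta Tg Lg Rg Cg Se Te Le Re Ee) as Z.
  destruct (HE (iotaO (hcod K))) as [[ED [cD [[Sd [Td [Ld Rd]]] Cd]]] _].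
  subst ED. rewrite vcod_io in Td, Rd.
  destruct (Cd (cunit (iotaO (hcod K))) (vid (hcod K)) (iotaO (hcod K))) as [th [[[St [Tt [Lt Rt]]] Et] _]];
    [sc..|].
  rewrite csrc_cu, vdom_io in St.
  assert (F3 : hdom (csrc cD) = hcod K /\ hcod (csrc cD) = FO T (hcod K)).
  { destruct (cell_bd D HD cD) as [X1 [X2 _]]. rewrite Ld, Rd in *. rewrite X1, X2. split; sc. }
  destruct F3 as [F3a F3b].
  assert (Oth : opcartesian th).
  { apply (comp_opcart cD (iotaO (hcod K)) th); rewrite ?vcod_io, ?vdom_io; auto. }
  assert (YK : globular_iso ((oC ⊙ iotaH K) ⊙ cD)).
  { apply (HBC_K EC oC (csrc cD) cD); auto; unfold IsCell; repeat split; auto. }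
  assert (YG : globular_iso ((th ⊙ iotaH (csrc gam)) ⊙ cB)).
  { apply (HBC_g (csrc gam) gam (conj eq_refl (conj Tg (conj Lg Rg))) Cg (csrc cD) th EB cB); auto.
    - unfold IsCell; rewrite DG, HgK; repeat split; auto.
    - unfold IsCell; rewrite CG; repeat split; auto. }
  pose proof (assoc_nat D HD (cid (hcomp (hunit (hdom K)) K)) (th ⊙ iotaH (csrc gam)) cB) as N1.
  specialize (N1 ltac:(sc) ltac:(sc)).
  assert (I1 : globular_iso ((cid (hcomp (hunit (hdom K)) K) ⊙ (th ⊙ iotaH (csrc gam))) ⊙ cB)).
  { eapply iso_by_nat; [ | | | | | exact N1]; sc. }
  pose proof (assoc_nat D HD (cid (hcomp (hunit (hdom K)) K)) th (iotaH (csrc gam))) as N2.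
  specialize (N2 ltac:(sc) ltac:(sc)).
  assert (E2 : (((cid (hcomp (hunit (hdom K)) K) ⊙ th) ⊙ iotaH (csrc gam)) ⊙ cB)
     ▷ (assoc (ctgt (cid (hcomp (hunit (hdom K)) K))) (ctgt th) (ctgt (iotaH (csrc gam))) ⊙ cid (ctgt cB))
     = (assoc (csrc (cid (hcomp (hunit (hdom K)) K))) (csrc th) (csrc (iotaH (csrc gam))) ⊙ cid (csrc cB))
     ▷ ((cid (hcomp (hunit (hdom K)) K) ⊙ (th ⊙ iotaH (csrc gam))) ⊙ cB)).
  { rewrite <- !ich by sc. rewrite cc_idr, cc_idl by sc. rewrite N2. reflexivity. }
  assert (I2 : globular_iso (((cid (hcomp (hunit (hdom K)) K) ⊙ th) ⊙ iotaH (csrc gam)) ⊙ cB)).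
  { eapply iso_by_nat; [ | | | | | exact E2]; sc. }
  assert (E3 : (((cid (hcomp (hunit (hdom K)) K) ⊙ th) ⊙ iotaH (csrc gam)) ⊙ cB)
     ▷ ((((oC ⊙ iotaH K) ⊙ cD) ⊙ cid (FH T (csrc gam))) ⊙ cid (ctgt cB))
     = (((oC ⊙ iotaH K) ⊙ cunit (iotaO (hcod K))) ⊙ iotaH (csrc gam)) ⊙ cB).
  { rewrite <- !ich by sc. rewrite !cc_idr by sc. rewrite cc_idl by sc. rewrite Et. reflexivity. }
  assert (I3 : globular_iso ((((oC ⊙ iotaH K) ⊙ cunit (iotaO (hcod K))) ⊙ iotaH (csrc gam)) ⊙ cB)).
  { rewrite <- E3. sc. }
  pose proof (runitor_nat D HD (oC ⊙ iotaH K)) as NR. rewrite cright_ch, cright_io in NR by sc.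
  assert (E4 : ((((oC ⊙ iotaH K) ⊙ cunit (iotaO (hcod K))) ⊙ iotaH (csrc gam)) ⊙ cB)
     ▷ ((runitor (ctgt (oC ⊙ iotaH K)) ⊙ cid (ctgt (iotaH (csrc gam)))) ⊙ cid (ctgt cB))
     = ((runitor (csrc (oC ⊙ iotaH K)) ⊙ cid (csrc gam)) ⊙ cid (csrc cB))
     ▷ (((oC ⊙ iotaH K) ⊙ iotaH (csrc gam)) ⊙ cB)).
  { rewrite <- !ich by sc. rewrite !cc_idr by sc. rewrite !cc_idl by sc. rewrite NR. reflexivity. }
  assert (I4 : globular_iso (((oC ⊙ iotaH K) ⊙ iotaH (csrc gam)) ⊙ cB)).
  { eapply iso_by_nat2; [ | | | | | exact E4]; sc. }
  pose proof (assoc_nat D HD oC (iotaH K) (iotaH (csrc gam))) as N5.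
  specialize (N5 ltac:(sc) ltac:(sc)).
  assert (E5 : (((oC ⊙ iotaH K) ⊙ iotaH (csrc gam)) ⊙ cB)
     ▷ (assoc (ctgt oC) (ctgt (iotaH K)) (ctgt (iotaH (csrc gam))) ⊙ cid (ctgt cB))
     = (assoc (csrc oC) (csrc (iotaH K)) (csrc (iotaH (csrc gam))) ⊙ cid (csrc cB))
     ▷ ((oC ⊙ (iotaH K ⊙ iotaH (csrc gam))) ⊙ cB)).
  { rewrite <- !ich by sc. rewrite cc_idr, cc_idl by sc. rewrite N5. reflexivity. }
  assert (I5 : globular_iso ((oC ⊙ (iotaH K ⊙ iotaH (csrc gam))) ⊙ cB)).
  { eapply iso_by_nat2; [ | | | | | exact E5]; sc. }
  destruct (sigma_iso K g rho gam eta HgK T0 L0 R0 Hcart Tg Lg Rg DG CG Se Te Le Re Ee Z) as [s [Is [Ss Ts]]].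
  destruct (proj1 Is) as [Ls Rs]. rewrite Ss in Ls, Rs.
  pose proof (comp_iso K gam g eta (eq_sym HgK) Tg Lg Rg DG CG Se Te Le Re Z) as Ic.
  pose proof (tr_nat_cell _ _ _ _ Hi s) as Ns. simpl in Ns. rewrite Ts, Ss in Ns.
  pose proof (tr_comp _ _ _ _ Hi K (csrc gam)) as Nc. simpl in Nc. specialize (Nc ltac:(sc)).
  rewrite cc_idl in Nc by sc.
  assert (E6 : ((oC ⊙ (iotaH K ⊙ iotaH (csrc gam))) ⊙ cB)
     ▷ ((cid EC ⊙ (Fcomp T K (csrc gam) ▷ FC T s)) ⊙ cid (ctgt cB))
     = ((cid (csrc oC) ⊙ s) ⊙ cid (csrc cB)) ▷ ((oC ⊙ iotaH (csrc rho)) ⊙ cB)).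
  { rewrite <- !ich by sc. rewrite !cc_idr by sc. rewrite !cc_idl by sc. rewrite Ns, <- Nc.
    rewrite cca by sc. reflexivity. }
  eapply iso_by_nat2; [ | | | | | exact E6]; sc.
Qed.

End Dev.

Theorem lemma5p9 (D : DCat) (HD : IsPseudoDouble D) (HE : IsEquipment D)
  (T : LaxData D) (muO : ob D -> ver D) (muH : hor D -> cell D)
  (iotaO : ob D -> ver D) (iotaH : hor D -> cell D)
  (HT : IsNormalLaxMonad T muO muH iotaO iotaH)
  (K : hor D) (g : ver D) (HgK : vcod g = hcod K)
  (R : hor D) (rho : cell D)
  (Hrho : IsCell rho R K (vid (hdom K)) g) (Hcart : cartesian rho)
  (HBC_K : RightBC T iotaO iotaH K)
  (HBC_g : forall (G : hor D) (gamma : cell D),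
      IsCell gamma G (hunit (vcod g)) (vid (vcod g)) g -> cartesian gamma ->
      RightBC T iotaO iotaH G) :
  RightBC T iotaO iotaH R.
Proof.
  exact (main_lemma HD T (monad_T T muO muH iotaO iotaH HT) iotaO iotaH (monad_iota T muO muH iotaO iotaH HT) HE K g HgK R rho Hrho Hcart HBC_K HBC_g).
Qed.
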